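(* Let $A\in\mathbb{R}^{n\times n}$ be symmetric positive definite. Let $S$ be the operator of one V-cycle of the classical (Ruge–Stüben) algebraic multigrid method for $A$ with Gauss–Seidel smoothing on every level: with levels $l=L,\dots,0$, $A_L=A$, full-column-rank interpolation matrices $P_l$ and $A_l=P_l^TA_{l+1}P_l$, the level operators are defined recursively by $B_0=A_0^{-1}$ and $I-B_lA_l=(I-S_l^TA_l)(I-P_{l-1}B_{l-1}P_{l-1}^TA_l)(I-S_lA_l)$ for $l\ge1$, where $S_l$ is the (forward) Gauss–Seidel smoother for $A_l$, and $S=B_L$. Let $B$ be the ILU($k$) preconditioner for $A$, which for SPD $A$ is the incomplete Cholesky preconditioner IC($k$), $B=(LL^T)^{-1}$. Define $B_{\mathrm{co}}$ by $I-B_{\mathrm{co}}A=(I-S^TA)(I-BA)(I-SA)$. Then $B_{\mathrm{co}}$ is symmetric positive definite.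
   Context: ILU($k$)/IC($k$) is incomplete factorization by Gaussian elimination in which fill-in entries are dropped according to their level of fill: initially $\mathcal L_{ij}=0$ if $a_{ij}\ne0$ or $i=j$ and $\mathcal L_{ij}=\infty$ otherwise; when an entry is updated by $a_{ij}:=a_{ij}-a_{ik}a_{kj}$, its level is updated by $\mathcal L_{ij}=\min\{\mathcal L_{ij},\mathcal L_{ik}+\mathcal L_{kj}+1\}$, and entries with level greater than $k$ are set to zero. The incomplete Cholesky factor $L$ is lower triangular and the factorization is assumed to be well defined (real, with positive diagonal). Gauss–Seidel smoother $S_l=(D_l+L_l)^{-1}$ with $D_l$, $L_l$ the diagonal and strictly lower triangular parts of $A_l$; transposes are Euclidean transposes. *)

(* Defs.v *)
From HB Require Import structures.
From mathcomp Require Import all_boot all_order all_algebra.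
Set Implicit Arguments. Unset Strict Implicit. Unset Printing Implicit Defensive.
Import Order.TTheory GRing.Theory Num.Theory.
Local Open Scope ring_scope.

Section Defs.
Variable R : rcfType.

Definition spd (n : nat) (M : 'M[R]_n) : Prop :=
  M^T = M /\ forall x : 'cV[R]_n, x != 0 -> 0 < (x^T *m M *m x) 0 0.

Definition gs (n : nat) (M : 'M[R]_n) : 'M[R]_n :=
  invmx (\matrix_(i, j) if (j <= i)%N then M i j else 0).

(* ---------- levels of fill (None = infinity) ---------- *)
Definition lev_add1 (a b : option nat) : option nat :=
  match a, b with Some x, Some y => Some (x + y).+1 | _, _ => None end.
Definition lev_min (a b : option nat) : option nat :=
  match a, b with
  | Some x, Some y => Some (minn x y)
  | Some x, None => Some x
  | None, y => y end.

Definition lev0 (n : nat) (M : 'M[R]_n) : 'I_n -> 'I_n -> option nat :=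
  fun i j => if (M i j != 0) || (i == j) then Some 0%N else None.

Definition lev_step (n : nat) (lev : 'I_n -> 'I_n -> option nat) (m : 'I_n) :
  'I_n -> 'I_n -> option nat :=
  fun i j => if (m < i)%N && (m < j)%N then lev_min (lev i j) (lev_add1 (lev i m) (lev m j))
             else lev i j.

Definition fill_level (n : nat) (M : 'M[R]_n) : 'I_n -> 'I_n -> option nat :=
  foldl (@lev_step n) (lev0 M) (enum 'I_n).

Definition keep (k n : nat) (M : 'M[R]_n) (i j : 'I_n) : bool :=
  if fill_level M i j is Some l then (l <= k)%N else false.

Definition chol_step (n : nat) (kp : 'I_n -> 'I_n -> bool) (W : 'M[R]_n) (m : 'I_n) : 'M[R]_n :=
  let p := Num.sqrt (W m m) in
  let c := fun i : 'I_n => if kp i m then W i m / p else 0 in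
  \matrix_(i, j)
    if (i == m) && (j == m) then p
    else if (j == m) && (m < i)%N then c i
    else if (m < i)%N && (m < j)%N then (if kp i j then W i j - c i * c j else 0)
    else W i j.

Definition ic_factor (k n : nat) (M : 'M[R]_n) : 'M[R]_n :=
  let W := foldl (chol_step (keep k M)) M (enum 'I_n) in
  \matrix_(i, j) if (j <= i)%N then W i j else 0.

Definition ic_prec (k n : nat) (M : 'M[R]_n) : 'M[R]_n :=
  let Lf := ic_factor k M in invmx (Lf *m Lf^T).

(* ---------- V-cycle AMG with Gauss-Seidel smoothing ----------
   Levels are indexed by depth d = L - l (d = 0 finest, d = L coarsest);
   m d = size at depth d; P d : 'M_(m d, m d.+1) interpolates from depth d+1 to d. *)
Variable m : nat -> nat.

Fixpoint Alev (A : 'M[R]_(m 0%N)) (P : forall d, 'M[R]_(m d, m d.+1)) (d : nat) : 'M[R]_(m d) :=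
  match d as d0 return 'M[R]_(m d0) with
  | O => A
  | S d' => (P d')^T *m Alev A P d' *m P d'
  end.

(* Bv A P j d : the V-cycle operator at depth d where j more coarse levels lie below;
   Bv 0 d = A_d^{-1};  I - B_d A_d = (I - S_d^T A_d)(I - P_d B_{d+1} P_d^T A_d)(I - S_d A_d). *)
Fixpoint Bv (A : 'M[R]_(m 0%N)) (P : forall d, 'M[R]_(m d, m d.+1)) (j d : nat) : 'M[R]_(m d) :=
  match j with
  | O => invmx (Alev A P d)
  | S j' =>
      let Ad := Alev A P d in
      let Sd := gs Ad in
      let Bc := Bv A P j' d.+1 in
      (1%:M - (1%:M - Sd^T *m Ad) *m (1%:M - P d *m Bc *m (P d)^T *m Ad)
              *m (1%:M - Sd *m Ad)) *m invmx Ad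
  end.

Definition vcycle (A : 'M[R]_(m 0%N)) (P : forall d, 'M[R]_(m d, m d.+1)) (L : nat) : 'M[R]_(m 0%N) :=
  Bv A P L 0%N.

End Defs.

Definition Bco (R : rcfType) (n : nat) (A S B : 'M[R]_n) : 'M[R]_n :=
  (1%:M - (1%:M - S^T *m A) *m (1%:M - B *m A) *m (1%:M - S *m A)) *m invmx A.

(* Main.v *)
Require Import Defs.
From HB Require Import structures.
From mathcomp Require Import all_boot all_order all_algebra.
From mathcomp Require Import ring lra.
Import Order.TTheory GRing.Theory Num.Theory.
Local Open Scope ring_scope.
Set Implicit Arguments. Unset Strict Implicit.

Section Aux.
Variable R : rcfType.

Definition bf (a b : nat) (M : 'M[R]_(a, b)) (x : 'cV[R]_a) (y : 'cV[R]_b) : R :=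
  (x^T *m M *m y) 0 0.

Lemma bf_mulr a b c (M : 'M[R]_(a,b)) (N : 'M[R]_(b,c)) x y :
  bf M x (N *m y) = bf (M *m N) x y.
Proof. by rewrite /bf !mulmxA. Qed.

Lemma bf_mull a b c (M : 'M[R]_(a,b)) (N : 'M[R]_(a,c)) x y :
  bf M (N *m x) y = bf (N^T *m M) x y.
Proof. by rewrite /bf trmx_mul !mulmxA. Qed.

Lemma bf_tr a b (M : 'M[R]_(a,b)) x y : bf M x y = bf M^T y x.
Proof.
rewrite /bf; transitivity ((x^T *m M *m y)^T 0 0); first by rewrite [RHS]mxE.
by rewrite !trmx_mul trmxK mulmxA.
Qed.

Lemma bf_sym a (M : 'M[R]_a) x y : M^T = M -> bf M x y = bf M y x.
Proof. by move=> h; rewrite bf_tr h. Qed.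

Lemma bfDl a b (M : 'M[R]_(a,b)) x1 x2 y : bf M (x1 + x2) y = bf M x1 y + bf M x2 y.
Proof. by rewrite /bf linearD /= !mulmxDl [LHS]mxE. Qed.
Lemma bfBl a b (M : 'M[R]_(a,b)) x1 x2 y : bf M (x1 - x2) y = bf M x1 y - bf M x2 y.
Proof. by rewrite /bf linearB /= !mulmxBl [LHS]mxE [X in _ + X = _]mxE. Qed.
Lemma bfDr a b (M : 'M[R]_(a,b)) x y1 y2 : bf M x (y1 + y2) = bf M x y1 + bf M x y2.
Proof. by rewrite /bf !mulmxDr [LHS]mxE. Qed.
Lemma bfBr a b (M : 'M[R]_(a,b)) x y1 y2 : bf M x (y1 - y2) = bf M x y1 - bf M x y2.
Proof. by rewrite /bf !mulmxBr [LHS]mxE [X in _ + X = _]mxE. Qed.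
Lemma bfDm a b (M N : 'M[R]_(a,b)) x y : bf (M + N) x y = bf M x y + bf N x y.
Proof. by rewrite /bf mulmxDr mulmxDl [LHS]mxE. Qed.
Lemma bfBm a b (M N : 'M[R]_(a,b)) x y : bf (M - N) x y = bf M x y - bf N x y.
Proof. by rewrite /bf mulmxBr mulmxBl [LHS]mxE [X in _ + X = _]mxE. Qed.
Lemma bf0l a b (M : 'M[R]_(a,b)) y : bf M 0 y = 0.
Proof. by rewrite /bf linear0 !mul0mx mxE. Qed.
Lemma bf0r a b (M : 'M[R]_(a,b)) x : bf M x 0 = 0.
Proof. by rewrite /bf mulmx0 mxE. Qed.

Lemma bf1_pos a (u : 'cV[R]_a) : u != 0 -> 0 < bf 1%:M u u.
Proof.
move=> nz.
have [i hi] : exists i, u i 0 != 0.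
  apply/existsP; apply: contraR nz => /existsPn h.
  by apply/eqP/matrixP => i j; rewrite (ord1 j) mxE; move: (h i); rewrite negbK => /eqP.
rewrite /bf mulmx1 mxE (bigD1 i) //= mxE.
have: 0 <= \sum_(j < a | j != i) (u^T 0 j * u j 0).
  by apply: sumr_ge0 => j _; rewrite mxE; nra.
have : 0 < u i 0 * u i 0.
  have [h|h|h] := ltgtP (u i 0) 0; [nra|nra|by rewrite h eqxx in hi].
lra.
Qed.


Lemma spdE n (M : 'M[R]_n) :
  spd M = (M^T = M /\ forall x, x != 0 -> 0 < bf M x x).
Proof. by []. Qed.

Lemma spd_ge0 n (M : 'M[R]_n) x : spd M -> 0 <= bf M x x.
Proof.
move=> [_ h]; have [->|nz] := eqVneq x 0; first by rewrite bf0l.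
exact/ltW/h.
Qed.

Lemma inj_unitmx n (M : 'M[R]_n) :
  (forall x : 'cV_n, M *m x = 0 -> x = 0) -> M \in unitmx.
Proof.
move=> h; rewrite -unitmx_tr -row_free_unit -kermx_eq0.
apply/eqP/row_matrixP => i; rewrite row0.
set u := row i _.
have hu : u *m M^T = 0 by apply/sub_kermxP; exact: row_sub.
have := congr1 trmx hu; rewrite trmx_mul trmxK linear0 => /h.
by move/(congr1 trmx); rewrite trmxK linear0.
Qed.

Lemma spd_unit n (M : 'M[R]_n) : spd M -> M \in unitmx.
Proof.
move=> hM; apply: inj_unitmx => x hx; apply/eqP; apply: contraT => nz.
by have := hM.2 x nz; rewrite -mulmxA hx mulmx0 mxE ltxx.
Qed.

Lemma spd_diag n (M : 'M[R]_n) i : spd M -> 0 < M i i.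
Proof.
move=> hM; have enz : (delta_mx i 0 : 'cV[R]_n) != 0.
  apply/eqP => /matrixP/(_ i 0); rewrite !mxE !eqxx => /eqP; by rewrite oner_eq0.
have := hM.2 _ enz; rewrite trmx_delta -rowE -colE.
by rewrite !mxE.
Qed.

Lemma spd_inv n (M : 'M[R]_n) : spd M -> spd (invmx M).
Proof.
move=> hM; have Mu := spd_unit hM; split; first by rewrite trmx_inv hM.1.
move=> x nz; set v := invmx M *m x.
have hx : x = M *m v by rewrite mulKVmx.
have vnz : v != 0 by apply: contra nz => /eqP v0; rewrite hx v0 mulmx0.
rewrite hx trmx_mul hM.1 mulmxK // mulmxA; exact: hM.2.
Qed.

Lemma colfree n p (P : 'M[R]_(n, p)) (x : 'cV[R]_p) :
  \rank P = p -> P *m x = 0 -> x = 0.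
Proof.
move=> hr hx; have hf : row_free P^T by rewrite /row_free mxrank_tr hr.
have := congr1 trmx hx; rewrite trmx_mul linear0 => /eqP.
rewrite mulmx_free_eq0 // => /eqP /(congr1 trmx); by rewrite trmxK linear0.
Qed.

Lemma spd_PtAP n p (A : 'M[R]_n) (P : 'M[R]_(n, p)) :
  spd A -> \rank P = p -> spd (P^T *m A *m P).
Proof.
move=> hA hr; split; first by rewrite !trmx_mul trmxK hA.1 mulmxA.
move=> x nz; rewrite -/(bf _ x x) -bf_mulr -[P^T]trmxK -bf_mull trmxK.
apply: hA.2; apply: contra nz => /eqP h; apply/eqP; exact: colfree h.
Qed.

Definition Inv n (B A : 'M[R]_n) :=
  B^T = B /\ (forall y, 0 <= bf B (A *m y) (A *m y)) /\
  (forall y, bf B (A *m y) (A *m y) <= bf A y y).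


Lemma bf_conj a b (N : 'M[R]_(a,b)) (M : 'M[R]_b) v w :
  bf (N *m M *m N^T) v w = bf M (N^T *m v) (N^T *m w).
Proof. by rewrite bf_mull bf_mulr trmxK. Qed.

Lemma bf_conj2 a b (N : 'M[R]_(a,b)) (M : 'M[R]_a) v w :
  bf (N^T *m M *m N) v w = bf M (N *m v) (N *m w).
Proof. by rewrite bf_mull bf_mulr. Qed.

Lemma bfA n (A : 'M[R]_n) y v : A^T = A -> bf A y v = bf 1%:M (A *m y) v.
Proof. by move=> h; rewrite bf_mull mulmx1 h. Qed.

Lemma Inv_inv n (A : 'M[R]_n) : spd A -> Inv (invmx A) A.
Proof.
move=> hA; have Au := spd_unit hA.
have e : forall y, bf (invmx A) (A *m y) (A *m y) = bf A y y.
  by move=> y; rewrite bf_mull bf_mulr hA.1 mulmxKV.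
split; first by rewrite trmx_inv hA.1.
by split=> y; rewrite e // spd_ge0.
Qed.

Lemma coarse n p (A : 'M[R]_n) (P : 'M[R]_(n,p)) Bc :
  spd A -> \rank P = p -> Inv Bc (P^T *m A *m P) -> Inv (P *m Bc *m P^T) A.
Proof.
move=> hA hr [hs [h0 h1]].
set Ac := P^T *m A *m P.
have hAc : spd Ac := spd_PtAP hA hr.
have Acu := spd_unit hAc.
split; first by rewrite !trmx_mul trmxK hs mulmxA.
have key : forall y, exists u, bf (P *m Bc *m P^T) (A *m y) (A *m y) =
    bf Bc (Ac *m u) (Ac *m u) /\ bf Ac u u <= bf A y y.
  move=> y; set u := invmx Ac *m (P^T *m (A *m y)).
  have hu : Ac *m u = P^T *m (A *m y) by rewrite mulKVmx.
  exists u; split; first by rewrite bf_conj hu.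
  set a := P *m u.
  have e1 : bf A a y = bf 1%:M u (Ac *m u).
    by rewrite hu bf_mulr mul1mx /a bf_mull bf_mulr.
  have e2 : bf A a a = bf 1%:M u (Ac *m u).
    by rewrite bf_mulr mul1mx /a /Ac bf_conj2.
  have e3 : bf A y a = bf A a y by rewrite bf_sym // hA.1.
  have := spd_ge0 (y - a) hA; rewrite !bfBl !bfBr.
  rewrite /Ac bf_conj2 -/a. lra.
split=> y; have [u [-> hu]] := key y; first exact: h0.
exact: le_trans (h1 u) hu.
Qed.

Lemma contr n (A S : 'M[R]_n) : spd A -> Inv S A ->
  forall y, bf A ((1%:M - S *m A) *m y) ((1%:M - S *m A) *m y) <= bf A y y.
Proof.
move=> hA [hs [h0 h1]] y.
set w := A *m y.
have ez : (1%:M - S *m A) *m y = y - S *m w by rewrite mulmxBl mul1mx -mulmxA.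
rewrite ez.
set s := bf S w w. set t := bf A (S *m w) (S *m w).
have ys : bf A y (S *m w) = s by rewrite (bfA _ _ hA.1) bf_mulr mul1mx.
have sy : bf A (S *m w) y = s by rewrite bf_sym ?hA.1.
have e1 : bf A (y - S *m w) (y - S *m w) = bf A y y - 2 * s + t.
  rewrite !bfBl !bfBr ys sy -/t. lra.
have st : bf S w (A *m (S *m w)) = t by rewrite bf_mulr /t bf_mull hs.
have ts : bf S (A *m (S *m w)) w = t by rewrite bf_sym ?hs.
have := h0 (y - S *m w); rewrite mulmxBr -/w !bfBl !bfBr st ts -/s.
have := h1 (S *m w); rewrite -/t.
have := h0 y; rewrite -/w -/s.
rewrite ys sy. lra.
Qed.

Definition comp n (A S C : 'M[R]_n) :=
  (1%:M - (1%:M - S^T *m A) *m (1%:M - C *m A) *m (1%:M - S *m A)) *m invmx A.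

Lemma comp_sym n (A S C : 'M[R]_n) : A^T = A -> A \in unitmx -> C^T = C ->
  (comp A S C)^T = comp A S C.
Proof.
move=> hA Au hC.
set X := (invmx A - S^T) *m A *m (invmx A - C) *m A *m (invmx A - S).
have eX : (1%:M - S^T *m A) *m (1%:M - C *m A) *m (1%:M - S *m A) *m invmx A = X.
  have h1 : (invmx A - S^T) *m A = 1%:M - S^T *m A by rewrite mulmxBl mulVmx.
  have h2 : (invmx A - C) *m A = 1%:M - C *m A by rewrite mulmxBl mulVmx.
  have h3 : (1%:M - S *m A) *m invmx A = invmx A - S by rewrite mulmxBl mul1mx mulmxK.
  by rewrite /X h1 -(mulmxA _ _ A) h2 -h3 !mulmxA.
have hX : X^T = X.
  have t1 : (invmx A - S)^T = invmx A - S^T by rewrite linearB /= trmx_inv hA.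
  have t2 : (invmx A - C)^T = invmx A - C by rewrite linearB /= trmx_inv hA hC.
  have t3 : (invmx A - S^T)^T = invmx A - S by rewrite linearB /= trmx_inv hA trmxK.
  by rewrite /X !trmx_mul t1 t2 t3 hA !mulmxA.
by rewrite /comp mulmxBl mul1mx eX linearB /= trmx_inv hA hX.
Qed.

Lemma comp_form n (A S C : 'M[R]_n) : A^T = A -> A \in unitmx -> forall y,
  bf (comp A S C) (A *m y) (A *m y) =
  bf A y y - bf A ((1%:M - S *m A) *m y) ((1%:M - S *m A) *m y)
  + bf C (A *m ((1%:M - S *m A) *m y)) (A *m ((1%:M - S *m A) *m y)).
Proof.
move=> hA Au y.
set Q := 1%:M - S *m A.
have eM : A^T *m comp A S C *m A = A - Q^T *m A *m Q + Q^T *m (A^T *m C *m A) *m Q.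
  rewrite hA /comp mulmxA mulmxKV // mulmxBr mulmx1.
  have hX1 : A *m (1%:M - S^T *m A) = Q^T *m A.
    have tQ : Q^T = 1%:M - A *m S^T by rewrite /Q linearB /= trmx1 trmx_mul hA.
    by rewrite tQ mulmxBr mulmxBl mulmx1 mul1mx mulmxA.
  rewrite !mulmxA hX1 -/Q (mulmxBr (Q^T *m A)) mulmx1 mulmxBl !mulmxA.
  by rewrite opprD opprK addrA.
by rewrite bf_mull bf_mulr eM bfDm bfBm !bf_conj2.
Qed.


Lemma comp_Inv n (A S C : 'M[R]_n) : spd A -> Inv C A ->
  (forall y, bf A ((1%:M - S *m A) *m y) ((1%:M - S *m A) *m y) <= bf A y y) ->
  Inv (comp A S C) A.
Proof.
move=> hA [hC [h0 h1]] hS; have Au := spd_unit hA.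
split; first exact: comp_sym hA.1 Au hC.
split=> y; rewrite (comp_form _ _ hA.1 Au); set z := (1%:M - S *m A) *m y.
  have := hS y; have := h0 z; rewrite -/z; lra.
have := h1 z; lra.
Qed.

Lemma comp_spd n (A S C : 'M[R]_n) : spd A -> Inv S A -> spd C -> spd (comp A S C).
Proof.
move=> hA hS hC; have Au := spd_unit hA.
split; first exact: comp_sym hA.1 Au hC.1.
move=> x nz; set y := invmx A *m x.
have hx : x = A *m y by rewrite mulKVmx.
have ynz : y != 0 by apply: contra nz => /eqP v0; rewrite hx v0 mulmx0.
rewrite -/(bf _ x x) hx (comp_form _ _ hA.1 Au); set z := (1%:M - S *m A) *m y.
have hc := contr hA hS y; rewrite -/z in hc.
have hy : 0 < bf A y y := hA.2 y ynz.
have [z0|znz] := eqVneq z 0.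
  by rewrite z0 mulmx0 !bf0l; lra.
have Aznz : A *m z != 0.
  by apply: contra znz => /eqP h; rewrite -(mulKmx Au z) h mulmx0.
have := hC.2 _ Aznz; rewrite -/(bf _ _ _). lra.
Qed.

Lemma gs_contr n (A : 'M[R]_n) : spd A -> forall y,
  bf A ((1%:M - gs A *m A) *m y) ((1%:M - gs A *m A) *m y) <= bf A y y.
Proof.
move=> hA y.
set T := \matrix_(i, j) (if (j <= i)%N then A i j else 0 : R).
rewrite /gs -/T.
have Tt : is_trig_mx T by apply/is_trig_mxP => i j hij; rewrite mxE leqNgt hij.
have Tu : T \in unitmx.
  rewrite unitmxE det_trig // unitfE; apply/prodf_neq0 => i _.
  by rewrite mxE leqnn; apply: lt0r_neq0; exact: spd_diag.
set w := invmx T *m (A *m y).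
have hz : (1%:M - invmx T *m A) *m y = y - w by rewrite mulmxBl mul1mx -mulmxA.
have hTw : T *m w = A *m y by rewrite mulKVmx.
set D := diag_mx (\row_i A i i).
have Asym i j : A j i = A i j by rewrite -{2}hA.1 mxE.
have hTD : T + T^T = A + D.
  apply/matrixP => i j; rewrite !mxE.
  have [->|neq] := eqVneq i j; first by rewrite leqnn mulr1n.
  rewrite mulr0n addr0.
  have neq' : (i : nat) != j by [].
  case: (leqP j i) => hji.
    have -> : (i <= j)%N = false by apply/negbTE; rewrite -ltnNge ltn_neqAle hji eq_sym neq'.
    by rewrite addr0.
  by rewrite ltnW // add0r Asym.
have Dge : 0 <= bf D w w.
  rewrite /bf mul_mx_diag mxE; apply: sumr_ge0 => j _; rewrite !mxE.
  have := spd_diag j hA; nra.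
have e1 : bf A w y = bf T w w.
  transitivity (bf 1%:M w (A *m y)); first by rewrite bf_mulr mul1mx.
  by rewrite -hTw bf_mulr mul1mx.
have e2 : bf T w w = bf T^T w w by rewrite [LHS]bf_tr.
have e3 : bf (T + T^T) w w = bf A w w + bf D w w by rewrite hTD bfDm.
rewrite bfDm in e3.
have e4 : bf A y w = bf A w y by rewrite bf_sym ?hA.1.
rewrite hz !bfBl !bfBr e4; lra.
Qed.

Lemma ic_spd k n (A : 'M[R]_n) : (forall i, 0 < ic_factor k A i i) -> spd (ic_prec k A).
Proof.
move=> hd; rewrite /ic_prec; set Lf := ic_factor k A.
have Tt : is_trig_mx Lf by apply/is_trig_mxP => i j hij; rewrite /Lf /ic_factor mxE leqNgt hij.
have Tu : Lf \in unitmx.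
  rewrite unitmxE det_trig // unitfE; apply/prodf_neq0 => i _.
  exact: lt0r_neq0.
have Ttu : Lf^T \in unitmx by rewrite unitmx_tr.
apply: spd_inv; split; first by rewrite trmx_mul trmxK.
move=> x nz; rewrite -/(bf _ x x).
have -> : bf (Lf *m Lf^T) x x = bf 1%:M (Lf^T *m x) (Lf^T *m x)
  by rewrite bf_mull bf_mulr trmxK mulmx1.
apply: bf1_pos; apply: contra nz => /eqP h; by rewrite -(mulKmx Ttu x) h mulmx0.
Qed.

End Aux.

Lemma Alev_spd (R : rcfType) (m : nat -> nat) (L : nat)
    (A : 'M[R]_(m 0%N)) (P : forall d, 'M[R]_(m d, m d.+1)) :
  spd A -> (forall d, (d < L)%N -> \rank (P d) = m d.+1) ->
  forall d, (d <= L)%N -> spd (Alev A P d).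
Proof.
move=> hA hr; elim=> [|d IH] hd //=.
apply: spd_PtAP; first exact/IH/ltnW.
exact: hr.
Qed.

Lemma vc_inv (R : rcfType) (m : nat -> nat) (L : nat)
    (A : 'M[R]_(m 0%N)) (P : forall d, 'M[R]_(m d, m d.+1)) :
  spd A -> (forall d, (d < L)%N -> \rank (P d) = m d.+1) ->
  forall j d, (j + d <= L)%N -> Inv (Bv A P j d) (Alev A P d).
Proof.
move=> hA hr; elim=> [|j IH] d hjd.
  apply: Inv_inv; exact: (Alev_spd hA hr hjd).
have hdL : (d <= L)%N by apply: leq_trans hjd; rewrite leq_addl.
have hAd := Alev_spd hA hr hdL.
change (Bv A P j.+1 d) with
  (comp (Alev A P d) (gs (Alev A P d)) (P d *m Bv A P j d.+1 *m (P d)^T)).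
apply: comp_Inv => //; last exact: gs_contr.
apply: coarse => //; first by apply: hr; apply: leq_trans hjd; rewrite addSn ltnS leq_addl.
by apply: IH; rewrite addnS -addSn.
Qed.

Theorem corollary3p2 (R : rcfType) (m : nat -> nat) (L : nat)
    (A : 'M[R]_(m 0%N)) (P : forall d, 'M[R]_(m d, m d.+1)) (k : nat) :
  spd A ->
  (forall d, (d < L)%N -> \rank (P d) = m d.+1) ->
  (forall i, 0 < ic_factor k A i i) ->
  spd (Bco A (vcycle A P L) (ic_prec k A)).
Proof.
move=> hA hr hic.
have hS := vc_inv hA hr (eq_leq (addn0 L)).
change (spd (comp A (vcycle A P L) (ic_prec k A))).
apply: comp_spd => //; last exact: ic_spd.
Qed.
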